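(* Let $A_k\in\mathbb{R}^{m\times n_k}$ be matrices and $Q_k\in\mathbb{R}^{p\times p}$ orthogonal matrices, for $k=1,\dots,K$. Then the matrices $$X:=[A_1\ \cdots\ A_K]\quad\text{and}\quad Y:=[A_1\otimes Q_1\ \cdots\ A_K\otimes Q_K]$$ have the same singular values up to multiplicities.
   Context: $\otimes$ denotes the Kronecker product of matrices. *)

(* Defs.v *)
From HB Require Import structures.
From mathcomp Require Import all_boot all_order all_algebra.
From mathcomp Require Import character.
From mathcomp Require Import reals.
Set Implicit Arguments. Unset Strict Implicit. Unset Printing Implicit Defensive.
Import Order.TTheory GRing.Theory Num.Theory.
Local Open Scope ring_scope.

Definition orthogonal_mx (R : realType) (p : nat) (Q : 'M[R]_p) : Prop :=
  Q^T *m Q = 1%:M.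

(* sigma is a singular value of M in R^{m x n} iff sigma >= 0 and there are
   unit vectors u in R^m, v in R^n with M v = sigma u and M^T u = sigma v.
   (This gives exactly the min(m,n) singular values of the SVD, as a set.) *)
Definition singular_value (R : realType) (m n : nat) (M : 'M[R]_(m, n)) (s : R)
  : Prop :=
  0 <= s /\
  exists (u : 'cV[R]_m) (v : 'cV[R]_n),
    [/\ u^T *m u = 1%:M, v^T *m v = 1%:M, M *m v = s *: u & M^T *m u = s *: v].

(* Main.v *)
Require Import Defs.
From HB Require Import structures.
From mathcomp Require Import all_boot all_order all_algebra.
From mathcomp Require Import character.
From mathcomp Require Import reals.
From mathcomp.real_closed Require Import mxtens.
From mathcomp Require Import zify.
Import Order.TTheory GRing.Theory Num.Theory.
Local Open Scope ring_scope.

Section T.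
Variable R : realType.

Lemma trow_entry n1 m2 n2 (r : 'rV[R]_n1) (B : 'M[R]_(m2,n2)) i k l :
  trow r B i (mxtens_index (k,l)) = r 0 k * B i l.
Proof.
elim: n1 r k => [|n1 IH] r k; first by case: k.
rewrite /= mxE; case: splitP => j /= hj.
- case: k hj => [[|k] hk] /= hj.
    rewrite mxE mxE; congr (r _ _ * B _ _); apply: val_inj => //=.
  exfalso; have := ltn_ord j; have := ltn_ord l; nia.
- case: k hj => [[|k] hk] /= hj.
    exfalso; have := ltn_ord j; have := ltn_ord l; nia.
  have hk' : (k < n1)%N by [].
  have -> : j = mxtens_index (Ordinal hk', l).
    apply: val_inj => /=; nia.
  by rewrite IH mxE; congr (r _ _ * _); apply: val_inj.
Qed.

Lemma tprod_entry m1 n1 m2 n2 (A : 'M[R]_(m1,n1)) (B : 'M[R]_(m2,n2)) i j k l :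
  tprod A B (mxtens_index (i,j)) (mxtens_index (k,l)) = A i k * B j l.
Proof.
elim: m1 A i => [|m1 IH] A i; first by case: i.
rewrite /= mxE; case: splitP => t /= ht.
- case: i ht => [[|i] hi] /= ht.
    have -> : t = j by apply: val_inj.
    by rewrite trow_entry mxE; congr (A _ _ * _); apply: val_inj.
  exfalso; have := ltn_ord t; have := ltn_ord j; nia.
- case: i ht => [[|i] hi] /= ht.
    exfalso; have := ltn_ord t; have := ltn_ord j; nia.
  have hi' : (i < m1)%N by [].
  have -> : t = mxtens_index (Ordinal hi', j).
    apply: val_inj => /=; nia.
  by rewrite IH mxE; congr (A _ _ * _); apply: val_inj.
Qed.

Lemma tprod_tens m1 n1 m2 n2 (A : 'M[R]_(m1,n1)) (B : 'M[R]_(m2,n2)) :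
  tprod A B = A *t B.
Proof.
apply/matrixP => x y.
case: (mxtens_indexP x) => i j; case: (mxtens_indexP y) => k l.
by rewrite tprod_entry tensmxE.
Qed.

Lemma tensZl m n a b (c : R) (A : 'M[R]_(m,n)) (B : 'M[R]_(a,b)) :
  (c *: A) *t B = c *: (A *t B).
Proof. by apply/matrixP => i j; rewrite !mxE mulrA. Qed.

Lemma tens_suml (I : Type) (r : seq I) (P : pred I) m n a b
  (F : I -> 'M[R]_(m,n)) (B : 'M[R]_(a,b)) :
  (\sum_(i <- r | P i) F i) *t B = \sum_(i <- r | P i) (F i *t B).
Proof.
apply/matrixP => i j; rewrite !mxE !summxE mulr_suml.
by apply: eq_bigr => k _; rewrite !mxE.
Qed.

Lemma scale_mxcol K (p_ : 'I_K -> nat) n (c : R) (B : forall i, 'M[R]_(p_ i, n)) :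
  c *: \mxcol_i B i = \mxcol_i (c *: B i).
Proof. by apply/matrixP => i j; rewrite !mxE. Qed.

Lemma submxcolZ K (p_ : 'I_K -> nat) n (c : R) (v : 'M[R]_(\sum_i p_ i, n)) k :
  submxcol (c *: v) k = c *: submxcol v k.
Proof. by apply/matrixP => i j; rewrite !mxE. Qed.

Lemma mxcol_norm K (p_ : 'I_K -> nat) (v : 'cV[R]_(\sum_i p_ i)) :
  v^T *m v = \sum_k (submxcol v k)^T *m submxcol v k.
Proof.
have vE := submxcolK v.
by rewrite -{1 2}vE tr_mxcol mul_mxrow_mxcol.
Qed.

Lemma tens_mx11 (a : 'M[R]_1) : a *t (1%:M : 'M[R]_1) = a.
Proof. by apply/matrixP => i j; rewrite !mxE !ord1 /= mulr1. Qed.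

Lemma tens_norm a b (x : 'cV[R]_a) (y : 'cV[R]_b) :
  (x *t y : 'cV[R]_(a*b))^T *m (x *t y : 'cV[R]_(a*b)) = (x^T *m x) *t (y^T *m y).
Proof. by rewrite -tensmx_mul -trmx_tens. Qed.

Lemma tens_mulc a b c d (A : 'M[R]_(a,c)) (B : 'M[R]_(b,d)) (x : 'cV[R]_c) (y : 'cV[R]_d) :
  (A *t B) *m (x *t y : 'cV[R]_(c*d)) = ((A *m x) *t (B *m y) : 'cV[R]_(a*b)).
Proof. exact: (tensmx_mul A B x y). Qed.

Lemma tensZlc a b (c : R) (x : 'cV[R]_a) (y : 'cV[R]_b) :
  ((c *: x) *t y : 'cV[R]_(a*b)) = c *: (x *t y : 'cV[R]_(a*b)).
Proof. exact (@tensZl _ _ _ _ c x y). Qed.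

Lemma tens_sumlc (I : Type) (r : seq I) (P : pred I) a b
  (F : I -> 'cV[R]_a) (y : 'cV[R]_b) :
  ((\sum_(i <- r | P i) F i) *t y : 'cV[R]_(a*b)) = \sum_(i <- r | P i) (F i *t y : 'cV[R]_(a*b)).
Proof. exact (@tens_suml _ r P _ _ _ _ F y). Qed.

Lemma dir1 K m p (n : 'I_K -> nat) (A : forall k : 'I_K, 'M[R]_(m, n k))
  (Q : 'I_K -> 'M[R]_p) (hp : (0 < p)%N) (hQ : forall k, (Q k)^T *m Q k = 1%:M) s :
  singular_value (\mxrow_k A k) s -> singular_value (\mxrow_k (A k *t Q k)) s.
Proof.
move=> [s0 [u [v [uu vv Xv Xu]]]].
pose e : 'cV[R]_p := delta_mx (Ordinal hp) 0.
have ee : e^T *m e = 1%:M.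
  by rewrite /e trmx_delta mul_delta_mx; apply/matrixP => i j; rewrite !ord1 !mxE.
have QQ k : Q k *m (Q k)^T = 1%:M by apply: mulmx1C; apply: hQ.
split => //.
exists (u *t e), (\mxcol_k (submxcol v k *t ((Q k)^T *m e))).
have vk k : (A k)^T *m u = s *: submxcol v k.
  by rewrite -submxcolZ -Xu tr_mxrow mxcol_mul mxcolK.
split.
- by rewrite tens_norm uu ee -tprod_tens tprod1.
- rewrite tr_mxcol mul_mxrow_mxcol.
  rewrite (eq_bigr (fun k => (submxcol v k)^T *m submxcol v k)); last first.
    move=> k _; rewrite tens_norm trmx_mul trmxK.
    by rewrite mulmxA -[e^T *m Q k *m _]mulmxA QQ mulmx1 ee tens_mx11.
  by rewrite -mxcol_norm.
- rewrite mul_mxrow_mxcol (eq_bigr (fun k => ((A k *m submxcol v k) *t e : 'cV_(m * p)))); last first.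
    by move=> k _; rewrite tens_mulc mulmxA QQ mul1mx.
  by rewrite -tens_sumlc -mul_mxrow_mxcol submxcolK Xv tensZlc.
- rewrite tr_mxrow mxcol_mul scale_mxcol; apply: eq_mxcol => k.
  by rewrite trmx_tens tens_mulc vk tensZlc.
Qed.

Definition unv a b (x : 'cV[R]_(a * b)) : 'M[R]_(a, b) :=
  \matrix_(i, r) x (mxtens_index (i, r)) 0.
Arguments unv {a b}.

Lemma sum_tens a b (F : 'I_(a * b) -> R) :
  \sum_t F t = \sum_i \sum_j F (mxtens_index (i, j)).
Proof.
rewrite pair_big /=.
rewrite (reindex (@mxtens_index a b)) /=; last first.
  by exists (@mxtens_unindex a b) => x _; [exact: mxtens_indexK | exact: mxtens_unindexK].
by apply: eq_bigr => -[i j].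
Qed.

Lemma unv_mul a b c d (B : 'M[R]_(a,c)) (C : 'M[R]_(b,d)) (x : 'cV[R]_(c * d)) :
  unv ((B *t C) *m x) = B *m unv x *m C^T.
Proof.
apply/matrixP => i r; rewrite !mxE sum_tens.
under [RHS]eq_bigr do rewrite !mxE mulr_suml.
rewrite exchange_big /=; apply: eq_bigr => j _; apply: eq_bigr => l _.
by rewrite !mxE !mxtens_indexK /= mulrAC.
Qed.

Lemma unvZ a b (c : R) (x : 'cV[R]_(a * b)) : unv (c *: x) = c *: unv x.
Proof. by apply/matrixP => i j; rewrite !mxE. Qed.

Lemma unv_sum a b (I : Type) (r : seq I) (P : pred I) (F : I -> 'cV[R]_(a * b)) :
  unv (\sum_(i <- r | P i) F i) = \sum_(i <- r | P i) unv (F i).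
Proof. by apply/matrixP => i j; rewrite !mxE !summxE; apply: eq_bigr => k _; rewrite !mxE. Qed.

Lemma norm_unv a b (x : 'cV[R]_(a * b)) :
  (x^T *m x) 0 0 = \sum_i \sum_r (unv x i r) ^+ 2.
Proof.
rewrite !mxE sum_tens; apply: eq_bigr => i _; apply: eq_bigr => j _.
by rewrite !mxE expr2.
Qed.

Lemma normcol a (y : 'cV[R]_a) : (y^T *m y) 0 0 = \sum_i (y i 0) ^+ 2.
Proof. by rewrite !mxE; apply: eq_bigr => i _; rewrite !mxE expr2. Qed.

Lemma normcol_ge0 a (y : 'cV[R]_a) : 0 <= (y^T *m y) 0 0.
Proof. by rewrite normcol; apply: sumr_ge0 => i _; apply: sqr_ge0. Qed.

Lemma normalize a (x : 'cV[R]_a) : (x^T *m x) 0 0 != 0 ->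
  let x' := (Num.sqrt ((x^T *m x) 0 0))^-1 *: x in x'^T *m x' = 1%:M.
Proof.
move=> h x'.
have c0 : 0 < (x^T *m x) 0 0 by rewrite lt_def h normcol_ge0.
rewrite /x'; set c := Num.sqrt _.
have -> : (c^-1 *: x)^T = c^-1 *: x^T by apply/matrixP => i j; rewrite !mxE.
rewrite -scalemxAl -scalemxAr scalerA.
rewrite [x^T *m x]mx11_scalar scale_scalar_mx -invfM -expr2 /c sqr_sqrtr ?ltW //.
by rewrite mulVf.
Qed.

Lemma exists_nz c (f : 'I_c -> R) : \sum_r f r = 1 -> exists r, f r != 0.
Proof.
move=> h; case: (pickP (fun r => f r != 0)) => [r hr|hn]; first by exists r.
exfalso; move: h; rewrite big1 => [|r _]; last by move/negbFE: (hn r) => /eqP.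
by move/eqP; rewrite eq_sym oner_eq0.
Qed.

Lemma finish a b c (X : 'M[R]_(a,b)) s (x : 'I_c -> 'cV[R]_a) (y : 'I_c -> 'cV[R]_b) :
  0 <= s -> (forall r, X *m y r = s *: x r) -> (forall r, X^T *m x r = s *: y r) ->
  \sum_r ((x r)^T *m x r) 0 0 = 1 -> \sum_r ((y r)^T *m y r) 0 0 = 1 ->
  singular_value X s.
Proof.
move=> s0 hX hXt /exists_nz [r hr] /exists_nz [r' hr'].
split => //.
have [s_0|sn0] := eqVneq s 0.
  exists ((Num.sqrt (((x r)^T *m x r) 0 0))^-1 *: x r),
         ((Num.sqrt (((y r')^T *m y r') 0 0))^-1 *: y r').
  split; [exact: normalize | exact: normalize | |].
  - by rewrite -scalemxAr hX s_0 !scale0r scaler0.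
  - by rewrite -scalemxAr hXt s_0 !scale0r scaler0.
have eqn : (y r)^T *m y r = (x r)^T *m x r.
  apply/(@scalerI _ _ s sn0).
  rewrite scalemxAr -hXt mulmxA -trmx_mul hX.
  have -> : (s *: x r)^T = s *: (x r)^T by apply/matrixP => i j; rewrite !mxE.
  by rewrite -scalemxAl.
exists ((Num.sqrt (((x r)^T *m x r) 0 0))^-1 *: x r),
       ((Num.sqrt (((x r)^T *m x r) 0 0))^-1 *: y r).
split; first exact: normalize.
- by rewrite -eqn; apply: normalize; rewrite eqn.
- by rewrite -scalemxAr hX !scalerA mulrC.
- by rewrite -scalemxAr hXt !scalerA mulrC.
Qed.

Lemma dir2 K m p (n : 'I_K -> nat) (A : forall k : 'I_K, 'M[R]_(m, n k))
  (Q : 'I_K -> 'M[R]_p) (hQ : forall k, (Q k)^T *m Q k = 1%:M) s :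
  singular_value (\mxrow_k (A k *t Q k)) s -> singular_value (\mxrow_k A k) s.
Proof.
move=> [s0 [u [v [uu vv Yv Yu]]]].
have QQ k : Q k *m (Q k)^T = 1%:M by apply: mulmx1C; apply: hQ.
pose U := unv u.
pose V k := unv (submxcol v k).
pose W k := V k *m (Q k)^T.
have hAW k : (A k)^T *m U = s *: W k.
  have : submxcol ((\mxrow_k (A k *t Q k))^T *m u) k = s *: submxcol v k.
    by rewrite Yu submxcolZ.
  rewrite tr_mxrow mxcol_mul mxcolK trmx_tens => /(congr1 unv).
  rewrite unv_mul unvZ trmxK -/U -/(V k) => h.
  by rewrite /W scalemxAl -h -mulmxA QQ mulmx1.
have hUW : \sum_k A k *m W k = s *: U.
  have := congr1 unv Yv.
  rewrite -[v]submxcolK mul_mxrow_mxcol unv_sum unvZ -/U => <-.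
  by apply: eq_bigr => k _; rewrite unv_mul /W mulmxA.
pose x r := col r U.
pose y r := \mxcol_k col r (W k).
apply: (@finish _ _ p _ s x y) => //.
- move=> r; rewrite mul_mxrow_mxcol /x !colE.
  under eq_bigr do rewrite colE mulmxA.
  by rewrite -mulmx_suml hUW scalemxAl.
- move=> r; rewrite tr_mxrow mxcol_mul scale_mxcol; apply: eq_mxcol => k.
  by rewrite /x !colE mulmxA hAW scalemxAl.
- under eq_bigr do rewrite normcol /x.
  under eq_bigr do under eq_bigr do rewrite mxE.
  by rewrite exchange_big /= /U -norm_unv uu mxE.
- rewrite (eq_bigr (fun r => \sum_k \sum_j (W k j r)^+2)); last first.
    move=> r _; rewrite /y tr_mxcol mul_mxrow_mxcol summxE; apply: eq_bigr => k _.
    by rewrite normcol; apply: eq_bigr => j _; rewrite !mxE.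
  rewrite exchange_big /=.
  rewrite (eq_bigr (fun k => ((submxcol v k)^T *m submxcol v k) 0 0)); last first.
    move=> k _; rewrite exchange_big /= norm_unv; apply: eq_bigr => j _.
    have WW : W k *m (W k)^T = V k *m (V k)^T.
      by rewrite /W trmx_mul trmxK mulmxA -(mulmxA (V k)) hQ mulmx1.
    transitivity ((W k *m (W k)^T) j j).
      by rewrite [RHS]mxE; apply: eq_bigr => r _; rewrite [_ r j]mxE expr2.
    by rewrite WW [LHS]mxE; apply: eq_bigr => r _; rewrite [_ r j]mxE expr2.
  by rewrite -summxE -mxcol_norm vv mxE.
Qed.
End T.

Theorem lemma5p3 (R : realType) (K m p : nat) (n : 'I_K -> nat)
  (A : forall k : 'I_K, 'M[R]_(m, n k)) (Q : 'I_K -> 'M[R]_p) :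
  (0 < p)%N ->
  (forall k, orthogonal_mx (Q k)) ->
  forall s : R,
    singular_value (\mxrow_(k < K) A k) s <->
    singular_value (\mxrow_(k < K) tprod (A k) (Q k)) s.
Proof.
move=> hp hQ s.
have -> : \mxrow_(k < K) tprod (A k) (Q k) = \mxrow_(k < K) (A k *t Q k).
  by apply: eq_mxrow => k; rewrite tprod_tens.
split; [exact: dir1 | exact: dir2].
Qed.
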